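(* Let $p,q\ge 0$ with $p+q=3$. Equip $\mathcal{G}(p,q)$ with the bilinear product $$x\bullet y = x_+y_+ + \widetilde{y_-}\,x_- + y_-x_+ + x_-\widetilde{y_+},$$ and define $N:\mathcal{G}(p,q)\to\mathbb{R}$ by $N(x)=\langle x\bullet x^*\rangle_0$. (In fact $x\bullet x^*$ is itself a real scalar, so $x\bullet x^* = N(x)\,1$.) Then the following hold. 1. $1$ is a two-sided unit for $\bullet$. 2. $N$ is a nondegenerate real quadratic form on the 8-dimensional space $\mathcal{G}(p,q)$. 3. $N(x\bullet y)=N(x)N(y)$ for all $x,y\in\mathcal{G}(p,q)$. Consequently $(\mathcal{G}(p,q),\bullet,N)$ is a Hurwitz algebra, and hence it is isomorphic either to the octonions $\mathbb{O}$ or to the split-octonions $\mathbb{O}_s$.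
   Context: Let $p,q\ge0$ with $p+q=3$. $\mathcal{G}(p,q)$ denotes the real Clifford (geometric) algebra of $\mathbb{R}^3$ with a nondegenerate quadratic form of signature $(p,q)$. It is the associative unital real algebra generated by an orthonormal basis $e_1,e_2,e_3$ subject to $e_i^2=\lambda_i$ and $e_ie_j=-e_je_i$ for $i\ne j$. Here $\lambda_i\in\{\pm1\}$, and exactly $p$ of the $\lambda_i$ equal $+1$. The algebra is 8-dimensional with basis $1,e_1,e_2,e_3,e_1e_2,e_2e_3,e_1e_3,e_1e_2e_3$. Juxtaposition denotes the (associative) geometric product. $\langle x\rangle_k$ denotes the grade-$k$ part of $x$. We write $x_+=\langle x\rangle_0+\langle x\rangle_2$ (even part) and $x_-=\langle x\rangle_1+\langle x\rangle_3$ (odd part). Reversion $x\mapsto x^\dagger$ is the linear anti-automorphism fixing vectors; it multiplies grade $k$ by $(-1)^{k(k-1)/2}$. Inversion is $\bar x=x_+-x_-$. Clifford conjugation is $\tilde x=(\bar x)^\dagger$; it multiplies grades $0,1,2,3$ by $+1,-1,-1,+1$ respectively. Full grade inversion is $x^*=2\langle x\rangle_0-x$, which equals $x_+^\dagger - x_-$. A Hurwitz algebra is a real algebra with a two-sided unit carrying a nondegenerate quadratic form $n$ satisfying $n(xy)=n(x)n(y)$ for all $x,y$. By Hurwitz's theorem, the 8-dimensional ones are exactly the octonions $\mathbb{O}$ and the split-octonions $\mathbb{O}_s$, up to isomorphism. *)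

(* Defs.v *)
From HB Require Import structures.
From mathcomp Require Import all_boot all_order all_algebra.
From mathcomp Require Import reals.
Set Implicit Arguments. Unset Strict Implicit. Unset Printing Implicit Defensive.
Import Order.TTheory GRing.Theory Num.Theory.
Local Open Scope ring_scope.

(* ---------- The Clifford algebra G(p,q) of R^3 ----------
   A multivector is a function from blades (subsets A of {e_1,e_2,e_3},
   indexed by {set 'I_3}) to coefficients; the blade A = {i1 < ... < ik}
   stands for e_{i1} ... e_{ik}; its grade is #|A|.  The signature is
   encoded by lam : 'I_3 -> R with e_i^2 = lam i in {1,-1}. *)

Notation mv R := {ffun {set 'I_3} -> R^o}.

Section Clifford.
Variable R : realType.
Variable lam : 'I_3 -> R.

Definition symd (A B : {set 'I_3}) : {set 'I_3} := (A :\: B) :|: (B :\: A).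

(* e_A e_B = bsign A B * e_(A symd B) *)
Definition bsign (A B : {set 'I_3}) : R :=
  (-1) ^+ #|[set ab : 'I_3 * 'I_3 |
              (ab.1 \in A) && (ab.2 \in B) && (nat_of_ord ab.2 < nat_of_ord ab.1)%N]|
  * \prod_(i in A :&: B) lam i.

Definition gp (x y : mv R) : mv R :=
  [ffun C => \sum_(A : {set 'I_3}) \sum_(B : {set 'I_3} | symd A B == C)
               bsign A B * x A * y B].

Definition gone : mv R := [ffun A : {set 'I_3} => (A == set0)%:R].

Definition gradek (k : nat) (x : mv R) : mv R :=
  [ffun A : {set 'I_3} => if #|A| == k then x A else 0].
Definition evp (x : mv R) : mv R := [ffun A : {set 'I_3} => if ~~ odd #|A| then x A else 0].
Definition odp (x : mv R) : mv R := [ffun A : {set 'I_3} => if odd #|A| then x A else 0].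
Definition grev (x : mv R) : mv R := [ffun A : {set 'I_3} => (-1) ^+ 'C(#|A|, 2) * x A].
Definition ginv (x : mv R) : mv R := evp x - odp x.
Definition cconj (x : mv R) : mv R := grev (ginv x).
Definition gstar (x : mv R) : mv R := 2%:R *: gradek 0 x - x.

Definition bullet (x y : mv R) : mv R :=
  gp (evp x) (evp y) + gp (cconj (odp y)) (odp x)
  + gp (odp y) (evp x) + gp (odp x) (cconj (evp y)).

Definition Nf (x : mv R) : R := bullet x (gstar x) set0.

End Clifford.

Section Hurwitz.
Variables (R : realType) (V : lmodType R).

Definition polar (N : V -> R) (x y : V) : R := N (x + y) - N x - N y.

(* N is a quadratic form: N(a x) = a^2 N(x) and its polar form is bilinear
   (it is symmetric by construction, so linearity in the second argument
    suffices). *)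
Definition is_quad_form (N : V -> R) : Prop :=
  (forall (a : R) (x : V), N (a *: x) = a ^+ 2 * N x) /\
  (forall (x y z : V) (a : R), polar N x (a *: y + z) = a * polar N x y + polar N x z).

Definition nondegenerate_qf (N : V -> R) : Prop :=
  forall x : V, (forall y : V, polar N x y = 0) -> x = 0.

Definition bilinear_op (mul : V -> V -> V) : Prop :=
  (forall (a : R) (x y z : V), mul (a *: x + y) z = a *: mul x z + mul y z) /\
  (forall (a : R) (x y z : V), mul z (a *: x + y) = a *: mul z x + mul z y).

Definition is_hurwitz (mul : V -> V -> V) (e : V) (N : V -> R) : Prop :=
  [/\ bilinear_op mul,
      (forall x, mul e x = x /\ mul x e = x),
      is_quad_form N, nondegenerate_qf N &
      (forall x y, N (mul x y) = N x * N y)].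

End Hurwitz.

Section Octonions.
Variable R : realType.

Notation quat := {ffun 'I_4 -> R^o}.
Definition qc (x : quat) (k : nat) : R := x (inord k).

(* Hamilton product, basis 1,i,j,k with ij = k, jk = i, ki = j *)
Definition qmul (a b : quat) : quat :=
  [ffun n : 'I_4 => match nat_of_ord n with
   | 0 => qc a 0 * qc b 0 - qc a 1 * qc b 1 - qc a 2 * qc b 2 - qc a 3 * qc b 3
   | 1 => qc a 0 * qc b 1 + qc a 1 * qc b 0 + qc a 2 * qc b 3 - qc a 3 * qc b 2
   | 2 => qc a 0 * qc b 2 - qc a 1 * qc b 3 + qc a 2 * qc b 0 + qc a 3 * qc b 1
   | _ => qc a 0 * qc b 3 + qc a 1 * qc b 2 - qc a 2 * qc b 1 + qc a 3 * qc b 0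
   end].
Definition qconj (a : quat) : quat :=
  [ffun n : 'I_4 => if nat_of_ord n == 0%N then a n else - a n].

Notation oct := {ffun 'I_8 -> R^o}.
Definition olo (x : oct) : quat := [ffun i : 'I_4 => x (lshift 4 i)].
Definition ohi (x : oct) : quat := [ffun i : 'I_4 => x (rshift 4 i)].
Definition opair (a b : quat) : oct :=
  [ffun i : 'I_8 => match split (i : 'I_(4 + 4)) with inl j => a j | inr j => b j end].

(* Cayley-Dickson doubling of the quaternions:
   (a,b)(c,d) = (ac + gam * conj(d) b, d a + b conj(c));
   gam = -1 gives the octonions O, gam = 1 the split-octonions O_s. *)
Definition cdmul (gam : R) (x y : oct) : oct :=
  opair (qmul (olo x) (olo y) + gam *: qmul (qconj (ohi y)) (ohi x))
        (qmul (ohi y) (olo x) + qmul (ohi x) (qconj (olo y))).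

Definition omul : oct -> oct -> oct := cdmul (-1).
Definition somul : oct -> oct -> oct := cdmul 1.

End Octonions.

Definition alg_iso (R : realType) (V W : lmodType R)
  (mulV : V -> V -> V) (mulW : W -> W -> W) : Prop :=
  exists f : V -> W,
    [/\ bijective f,
        (forall (a : R) (x y : V), f (a *: x + y) = a *: f x + f y) &
        (forall x y : V, f (mulV x y) = mulW (f x) (f y))].

(* Main.v *)
Require Import Defs.
From HB Require Import structures.
From mathcomp Require Import all_boot all_order all_algebra.
From mathcomp Require Import reals.
From mathcomp Require Import ring lra.
Set Implicit Arguments. Unset Strict Implicit. Unset Printing Implicit Defensive.
Import Order.TTheory GRing.Theory Num.Theory.
Local Open Scope ring_scope.

Definition sb (b0 b1 b2 : bool) : {set 'I_3} :=
  [set i : 'I_3 | [|| (val i == 0%N) && b0, (val i == 1%N) && b1 | (val i == 2%N) && b2]].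
Definition i0 : 'I_3 := @Ordinal 3 0 isT.
Definition i1 : 'I_3 := @Ordinal 3 1 isT.
Definition i2 : 'I_3 := @Ordinal 3 2 isT.

Lemma in_sb i a0 a1 a2 : (i \in sb a0 a1 a2) =
  [|| (val i == 0%N) && a0, (val i == 1%N) && a1 | (val i == 2%N) && a2].
Proof. by rewrite inE. Qed.

Lemma ord3P (P : 'I_3 -> Prop) : P i0 -> P i1 -> P i2 -> forall i, P i.
Proof.
move=> h0 h1 h2 [[|[|[|k]]] Hk].
- by rewrite (_ : Ordinal Hk = i0) //; apply: val_inj.
- by rewrite (_ : Ordinal Hk = i1) //; apply: val_inj.
- by rewrite (_ : Ordinal Hk = i2) //; apply: val_inj.
- by [].
Qed.

Lemma sb_cover (A : {set 'I_3}) : A = sb (i0 \in A) (i1 \in A) (i2 \in A).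
Proof.
apply/setP; apply: ord3P; rewrite in_sb /=; by case: (_ \in A).
Qed.

Lemma sb_eq a0 a1 a2 c0 c1 c2 :
  (sb a0 a1 a2 == sb c0 c1 c2) = [&& a0 == c0, a1 == c1 & a2 == c2].
Proof.
apply/eqP/and3P.
- move=> /setP h; have h0 := h i0; have h1 := h i1; have h2 := h i2.
  move: h0 h1 h2; rewrite !in_sb /= !orbF => -> -> ->; by split.
- by case=> /eqP-> /eqP-> /eqP->.
Qed.

Lemma symd_sb a0 a1 a2 c0 c1 c2 :
  symd (sb a0 a1 a2) (sb c0 c1 c2) = sb (a0 (+) c0) (a1 (+) c1) (a2 (+) c2).
Proof.
apply/setP; apply: ord3P; rewrite /symd !inE /=;
  by case: a0; case: a1; case: a2; case: c0; case: c1; case: c2.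
Qed.

Lemma symdK A C : symd A (symd A C) = C.
Proof. by rewrite (sb_cover A) (sb_cover C) !symd_sb; case: (i0 \in A); case: (i1 \in A); case: (i2 \in A); case: (i0 \in C); case: (i1 \in C); case: (i2 \in C). Qed.

Lemma symd_eq A B C : (symd A B == C) = (B == symd A C).
Proof.
apply/eqP/eqP => [<-|->]; last exact: symdK.
rewrite (sb_cover A) (sb_cover B) !symd_sb.
by case: (i0 \in A); case: (i1 \in A); case: (i2 \in A); case: (i0 \in B); case: (i1 \in B); case: (i2 \in B).
Qed.

Lemma sum_sets (R : nmodType) (F : {set 'I_3} -> R) :
  \sum_(A : {set 'I_3}) F A =
  \sum_(b0 : bool) \sum_(b1 : bool) \sum_(b2 : bool) F (sb b0 b1 b2).
Proof.
rewrite (reindex (fun p : bool * bool * bool => sb p.1.1 p.1.2 p.2)) /=; last first.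
  exists (fun A : {set 'I_3} => (i0 \in A, i1 \in A, i2 \in A)) => [[[a b] c] _|A _] /=.
    by rewrite !in_sb /= !orbF.
  by rewrite -sb_cover.
by rewrite pair_bigA pair_bigA.
Qed.

Lemma card_sb a0 a1 a2 : #|sb a0 a1 a2| = (a0 + a1 + a2)%N.
Proof.
rewrite -sum1_card big_mkcond /= !big_ord_recl big_ord0 /= !in_sb /=.
by case: a0; case: a1; case: a2.
Qed.
Lemma sum_pairs (R : nmodType) (G : 'I_3 * 'I_3 -> R) :
  \sum_(p : 'I_3 * 'I_3) G p = \sum_(i : 'I_3) \sum_(j : 'I_3) G (i, j).
Proof. by rewrite pair_bigA; apply: eq_bigr => -[i j]. Qed.

Lemma sum_I3 (R : nmodType) (G : 'I_3 -> R) : \sum_(i : 'I_3) G i = G i0 + G i1 + G i2.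
Proof.
rewrite !big_ord_recl big_ord0 addr0 addrA; congr (G _ + G _ + G _); exact: val_inj.
Qed.

Lemma prod_I3 (R : comNzRingType) (G : 'I_3 -> R) : \prod_(i : 'I_3) G i = G i0 * G i1 * G i2.
Proof.
rewrite !big_ord_recl big_ord0 mulr1 mulrA; congr (G _ * G _ * G _); exact: val_inj.
Qed.

Lemma card_pairs a0 a1 a2 b0 b1 b2 :
  #|[set ab : 'I_3 * 'I_3 | (ab.1 \in sb a0 a1 a2) && (ab.2 \in sb b0 b1 b2)
     && (nat_of_ord ab.2 < nat_of_ord ab.1)%N]| = (a1 * b0 + a2 * b0 + a2 * b1)%N.
Proof.
rewrite -sum1_card big_mkcond /= sum_pairs !sum_I3 !inE /=.
by case: a0; case: a1; case: a2; case: b0; case: b1; case: b2.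
Qed.

Notation S000 := (sb false false false).
Notation S100 := (sb true false false).
Notation S010 := (sb false true false).
Notation S001 := (sb false false true).
Notation S110 := (sb true true false).
Notation S101 := (sb true false true).
Notation S011 := (sb false true true).
Notation S111 := (sb true true true).

Section Cl.
Variable R : realType.
Variable lam : 'I_3 -> R.

Lemma bsign_sb a0 a1 a2 b0 b1 b2 :
  bsign lam (sb a0 a1 a2) (sb b0 b1 b2) =
  (-1) ^+ (a1 * b0 + a2 * b0 + a2 * b1)%N *
  ((if a0 && b0 then lam i0 else 1) * (if a1 && b1 then lam i1 else 1) *
   (if a2 && b2 then lam i2 else 1)).
Proof.
rewrite /bsign card_pairs; congr (_ * _).
rewrite big_mkcond /= prod_I3 !inE /=.
by case: a0; case: a1; case: a2; case: b0; case: b1; case: b2.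
Qed.

Lemma gpE (x y : mv R) C :
  gp lam x y C = \sum_(A : {set 'I_3}) bsign lam A (symd A C) * x A * y (symd A C).
Proof.
rewrite ffunE; apply: eq_bigr => A _.
by rewrite (eq_bigl (fun B => B == symd A C)) ?big_pred1_eq // => B; exact: symd_eq.
Qed.

Lemma evp_sb (x : mv R) a0 a1 a2 :
  evp x (sb a0 a1 a2) = if ~~ odd (a0 + a1 + a2)%N then x (sb a0 a1 a2) else 0.
Proof. by rewrite ffunE card_sb. Qed.
Lemma odp_sb (x : mv R) a0 a1 a2 :
  odp x (sb a0 a1 a2) = if odd (a0 + a1 + a2)%N then x (sb a0 a1 a2) else 0.
Proof. by rewrite ffunE card_sb. Qed.
Lemma cconj_sb (x : mv R) a0 a1 a2 :
  cconj x (sb a0 a1 a2) = (-1) ^+ 'C((a0 + a1 + a2)%N, 2) *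
    (if ~~ odd (a0 + a1 + a2)%N then x (sb a0 a1 a2) else - x (sb a0 a1 a2)).
Proof. rewrite /cconj /grev /ginv !ffunE card_sb; case: odd => /=; ring. Qed.

Lemma symd_sum (V : nmodType) A C (F : {set 'I_3} -> V) :
  \sum_(B | symd A B == C) F B = F (symd A C).
Proof.
by rewrite (eq_bigl (fun B => B == symd A C)) ?big_pred1_eq // => B; exact: symd_eq.
Qed.



Lemma bul000 (x y : mv R) : bullet lam x y S000 = (x S000 * y S000 - lam i0 * x S100 * y S100 - lam i1 * x S010 * y S010 - lam i2 * x S001 * y S001 - lam i0 * lam i1 * x S110 * y S110 - lam i0 * lam i2 * x S101 * y S101 - lam i1 * lam i2 * x S011 * y S011 - lam i0 * lam i1 * lam i2 * x S111 * y S111).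
Proof.
rewrite /bullet !ffunE !sum_sets !big_bool !symd_sum !symd_sb /= !bsign_sb /=.
rewrite !cconj_sb !evp_sb !odp_sb /=.
ring.
Qed.

Lemma bul100 (x y : mv R) : bullet lam x y S100 = (x S000 * y S100 + x S100 * y S000 + lam i1 * x S010 * y S110 + lam i2 * x S001 * y S101 - lam i1 * x S110 * y S010 - lam i2 * x S101 * y S001 - lam i1 * lam i2 * x S011 * y S111 + lam i1 * lam i2 * x S111 * y S011).
Proof.
rewrite /bullet !ffunE !sum_sets !big_bool !symd_sum !symd_sb /= !bsign_sb /=.
rewrite !cconj_sb !evp_sb !odp_sb /=.
ring.
Qed.

Lemma bul010 (x y : mv R) : bullet lam x y S010 = (x S000 * y S010 - lam i0 * x S100 * y S110 + x S010 * y S000 + lam i2 * x S001 * y S011 + lam i0 * x S110 * y S100 + lam i0 * lam i2 * x S101 * y S111 - lam i2 * x S011 * y S001 - lam i0 * lam i2 * x S111 * y S101).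
Proof.
rewrite /bullet !ffunE !sum_sets !big_bool !symd_sum !symd_sb /= !bsign_sb /=.
rewrite !cconj_sb !evp_sb !odp_sb /=.
ring.
Qed.

Lemma bul001 (x y : mv R) : bullet lam x y S001 = (x S000 * y S001 - lam i0 * x S100 * y S101 - lam i1 * x S010 * y S011 + x S001 * y S000 - lam i0 * lam i1 * x S110 * y S111 + lam i0 * x S101 * y S100 + lam i1 * x S011 * y S010 + lam i0 * lam i1 * x S111 * y S110).
Proof.
rewrite /bullet !ffunE !sum_sets !big_bool !symd_sum !symd_sb /= !bsign_sb /=.
rewrite !cconj_sb !evp_sb !odp_sb /=.
ring.
Qed.

Lemma bul110 (x y : mv R) : bullet lam x y S110 = (x S000 * y S110 + x S100 * y S010 - x S010 * y S100 + lam i2 * x S001 * y S111 + x S110 * y S000 - lam i2 * x S101 * y S011 + lam i2 * x S011 * y S101 - lam i2 * x S111 * y S001).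
Proof.
rewrite /bullet !ffunE !sum_sets !big_bool !symd_sum !symd_sb /= !bsign_sb /=.
rewrite !cconj_sb !evp_sb !odp_sb /=.
ring.
Qed.

Lemma bul101 (x y : mv R) : bullet lam x y S101 = (x S000 * y S101 + x S100 * y S001 - lam i1 * x S010 * y S111 - x S001 * y S100 + lam i1 * x S110 * y S011 + x S101 * y S000 - lam i1 * x S011 * y S110 + lam i1 * x S111 * y S010).
Proof.
rewrite /bullet !ffunE !sum_sets !big_bool !symd_sum !symd_sb /= !bsign_sb /=.
rewrite !cconj_sb !evp_sb !odp_sb /=.
ring.
Qed.

Lemma bul011 (x y : mv R) : bullet lam x y S011 = (x S000 * y S011 + lam i0 * x S100 * y S111 + x S010 * y S001 - x S001 * y S010 - lam i0 * x S110 * y S101 + lam i0 * x S101 * y S110 + x S011 * y S000 - lam i0 * x S111 * y S100).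
Proof.
rewrite /bullet !ffunE !sum_sets !big_bool !symd_sum !symd_sb /= !bsign_sb /=.
rewrite !cconj_sb !evp_sb !odp_sb /=.
ring.
Qed.

Lemma bul111 (x y : mv R) : bullet lam x y S111 = (x S000 * y S111 - x S100 * y S011 + x S010 * y S101 - x S001 * y S110 + x S110 * y S001 - x S101 * y S010 + x S011 * y S100 + x S111 * y S000).
Proof.
rewrite /bullet !ffunE !sum_sets !big_bool !symd_sum !symd_sb /= !bsign_sb /=.
rewrite !cconj_sb !evp_sb !odp_sb /=.
ring.
Qed.

End Cl.
Section Cl2.
Variable R : realType.
Variable lam : 'I_3 -> R.

Lemma set0_sb : set0 = sb false false false :> {set 'I_3}.
Proof. by apply/setP => i; rewrite !inE !andbF. Qed.

Lemma mvD (f g : mv R) A : (f + g) A = f A + g A.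
Proof. by rewrite ffunE. Qed.
Lemma mvZ (c : R) (f : mv R) A : (c *: f) A = c * f A.
Proof. by rewrite ffunE. Qed.

Lemma gstar_sb (x : mv R) a0 a1 a2 :
  gstar x (sb a0 a1 a2) = if [|| a0, a1 | a2] then - x (sb a0 a1 a2) else x (sb a0 a1 a2).
Proof. rewrite /gstar /gradek !ffunE card_sb; case: a0; case: a1; case: a2 => /=; rewrite ?scaler0 ?scaler_nat; ring. Qed.

Lemma gone_sb a0 a1 a2 : gone R (sb a0 a1 a2) = (~~ [|| a0, a1 | a2])%:R.
Proof. by rewrite ffunE set0_sb sb_eq; case: a0; case: a1; case: a2. Qed.

Lemma NfE (x : mv R) : Nf lam x = x S000 * x S000 + lam i0 * x S100 * x S100 + lam i1 * x S010 * x S010 + lam i2 * x S001 * x S001 + lam i0 * lam i1 * x S110 * x S110 + lam i0 * lam i2 * x S101 * x S101 + lam i1 * lam i2 * x S011 * x S011 + lam i0 * lam i1 * lam i2 * x S111 * x S111.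
Proof. rewrite /Nf set0_sb bul000 !gstar_sb /=; ring. Qed.

Lemma mv_ext (x y : mv R) : (forall a0 a1 a2, x (sb a0 a1 a2) = y (sb a0 a1 a2)) -> x = y.
Proof. move=> h; apply/ffunP => A; rewrite (sb_cover A); exact: h. Qed.

Lemma quadf : is_quad_form (Nf lam).
Proof.
split.
- move=> a x; rewrite !NfE !mvZ; ring.
- move=> x y z a; rewrite /polar !NfE !mvD !mvZ; ring.
Qed.

Lemma part_b (x : mv R) : bullet lam (gone R) x = x /\ bullet lam x (gone R) = x.
Proof.
split; apply: mv_ext => a0 a1 a2; case: a0; case: a1; case: a2; rewrite ?bul000 ?bul100 ?bul010 ?bul001 ?bul110 ?bul101 ?bul011 ?bul111 !gone_sb /=; ring.
Qed.

Lemma bilin : bilinear_op (bullet lam).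
Proof.
split=> a x y z; apply: mv_ext => b0 b1 b2; rewrite [in RHS]mvD [in RHS]mvZ;
  case: b0; case: b1; case: b2; rewrite ?bul000 ?bul100 ?bul010 ?bul001 ?bul110 ?bul101 ?bul011 ?bul111 !mvD !mvZ; ring.
Qed.

Definition eb (A : {set 'I_3}) : mv R := [ffun B => (B == A)%:R].

Definition fmap (t : seq (R * {set 'I_3})) (x : mv R) : {ffun 'I_8 -> R^o} :=
  [ffun n : 'I_8 => (nth (0, set0) t n).1 * x (nth (0, set0) t n).2].
Definition gmap (t : seq (R * {set 'I_3})) (u : {ffun 'I_8 -> R^o}) : mv R :=
  [ffun B => \sum_(k <- [:: 0; 1; 2; 3; 4; 5; 6; 7]%N)
     ((B == (nth (0, set0) t k).2)%:R * (nth (0, set0) t k).1 * u (inord k))].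

Lemma fmapE t x (n : 'I_8) : fmap t x n = (nth (0, set0) t n).1 * x (nth (0, set0) t n).2.
Proof. by rewrite ffunE. Qed.
Lemma gmapE t u B : gmap t u B = \sum_(k <- [:: 0; 1; 2; 3; 4; 5; 6; 7]%N)
     ((B == (nth (0, set0) t k).2)%:R * (nth (0, set0) t k).1 * u (inord k)).
Proof. by rewrite ffunE. Qed.

Lemma oct_ext (u v : {ffun 'I_8 -> R^o}) :
  u (inord 0) = v (inord 0) -> u (inord 1) = v (inord 1) ->
  u (inord 2) = v (inord 2) -> u (inord 3) = v (inord 3) ->
  u (inord 4) = v (inord 4) -> u (inord 5) = v (inord 5) ->
  u (inord 6) = v (inord 6) -> u (inord 7) = v (inord 7) -> u = v.
Proof.
move=> h0 h1 h2 h3 h4 h5 h6 h7; apply/ffunP => -[k Hk].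
rewrite -(inord_val (Ordinal Hk)) /=.
do 8 (case: k Hk => [|k] Hk; [by []|]).
by [].
Qed.

Lemma scaleRo (a : R) (b : R^o) : a *: b = a * b.
Proof. by []. Qed.

Lemma opair_l (a b : {ffun 'I_4 -> R^o}) (q : 'I_4) : opair a b (lshift 4 q) = a q.
Proof. by rewrite ffunE (unsplitK (inl q)). Qed.
Lemma opair_r (a b : {ffun 'I_4 -> R^o}) (q : 'I_4) : opair a b (rshift 4 q) = b q.
Proof. by rewrite ffunE (unsplitK (inr q)). Qed.
Lemma lsh_inord k : (k < 4)%N -> lshift 4 (inord k : 'I_4) = inord k :> 'I_8.
Proof. move=> hk; apply: val_inj; rewrite /= !inordK //; exact: (leq_trans hk). Qed.
Lemma rsh_inord k : (k < 4)%N -> rshift 4 (inord k : 'I_4) = inord k.+4 :> 'I_8.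
Proof. move=> hk; apply: val_inj; rewrite /= !inordK // addnC addn4 //. Qed.

Lemma cdE0 (g : R) (u v : {ffun 'I_8 -> R^o}) : cdmul g u v (inord 0) = (u (inord 0) * v (inord 0) - u (inord 1) * v (inord 1) - u (inord 2) * v (inord 2) - u (inord 3) * v (inord 3) + g * u (inord 4) * v (inord 4) + g * u (inord 5) * v (inord 5) + g * u (inord 6) * v (inord 6) + g * u (inord 7) * v (inord 7)).
Proof.
transitivity (cdmul g u v (lshift 4 (inord 0 : 'I_4))); first by rewrite lsh_inord.
rewrite /cdmul opair_l !ffunE /qmul /qconj /qc /olo /ohi !ffunE !inordK //= ?ffunE ?inordK //= ?lsh_inord // ?rsh_inord // ?scaleRo.
ring.
Qed.

Lemma cdE1 (g : R) (u v : {ffun 'I_8 -> R^o}) : cdmul g u v (inord 1) = (u (inord 0) * v (inord 1) + u (inord 1) * v (inord 0) + u (inord 2) * v (inord 3) - u (inord 3) * v (inord 2) - g * u (inord 4) * v (inord 5) + g * u (inord 5) * v (inord 4) + g * u (inord 6) * v (inord 7) - g * u (inord 7) * v (inord 6)).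
Proof.
transitivity (cdmul g u v (lshift 4 (inord 1 : 'I_4))); first by rewrite lsh_inord.
rewrite /cdmul opair_l !ffunE /qmul /qconj /qc /olo /ohi !ffunE !inordK //= ?ffunE ?inordK //= ?lsh_inord // ?rsh_inord // ?scaleRo.
ring.
Qed.

Lemma cdE2 (g : R) (u v : {ffun 'I_8 -> R^o}) : cdmul g u v (inord 2) = (u (inord 0) * v (inord 2) - u (inord 1) * v (inord 3) + u (inord 2) * v (inord 0) + u (inord 3) * v (inord 1) - g * u (inord 4) * v (inord 6) - g * u (inord 5) * v (inord 7) + g * u (inord 6) * v (inord 4) + g * u (inord 7) * v (inord 5)).
Proof.
transitivity (cdmul g u v (lshift 4 (inord 2 : 'I_4))); first by rewrite lsh_inord.
rewrite /cdmul opair_l !ffunE /qmul /qconj /qc /olo /ohi !ffunE !inordK //= ?ffunE ?inordK //= ?lsh_inord // ?rsh_inord // ?scaleRo.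
ring.
Qed.

Lemma cdE3 (g : R) (u v : {ffun 'I_8 -> R^o}) : cdmul g u v (inord 3) = (u (inord 0) * v (inord 3) + u (inord 1) * v (inord 2) - u (inord 2) * v (inord 1) + u (inord 3) * v (inord 0) - g * u (inord 4) * v (inord 7) + g * u (inord 5) * v (inord 6) - g * u (inord 6) * v (inord 5) + g * u (inord 7) * v (inord 4)).
Proof.
transitivity (cdmul g u v (lshift 4 (inord 3 : 'I_4))); first by rewrite lsh_inord.
rewrite /cdmul opair_l !ffunE /qmul /qconj /qc /olo /ohi !ffunE !inordK //= ?ffunE ?inordK //= ?lsh_inord // ?rsh_inord // ?scaleRo.
ring.
Qed.

Lemma cdE4 (g : R) (u v : {ffun 'I_8 -> R^o}) : cdmul g u v (inord 4) = (u (inord 0) * v (inord 4) - u (inord 1) * v (inord 5) - u (inord 2) * v (inord 6) - u (inord 3) * v (inord 7) + u (inord 4) * v (inord 0) + u (inord 5) * v (inord 1) + u (inord 6) * v (inord 2) + u (inord 7) * v (inord 3)).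
Proof.
transitivity (cdmul g u v (rshift 4 (inord 0 : 'I_4))); first by rewrite rsh_inord.
rewrite /cdmul opair_r !ffunE /qmul /qconj /qc /olo /ohi !ffunE !inordK //= ?ffunE ?inordK //= ?lsh_inord // ?rsh_inord // ?scaleRo.
ring.
Qed.

Lemma cdE5 (g : R) (u v : {ffun 'I_8 -> R^o}) : cdmul g u v (inord 5) = (u (inord 0) * v (inord 5) + u (inord 1) * v (inord 4) - u (inord 2) * v (inord 7) + u (inord 3) * v (inord 6) - u (inord 4) * v (inord 1) + u (inord 5) * v (inord 0) - u (inord 6) * v (inord 3) + u (inord 7) * v (inord 2)).
Proof.
transitivity (cdmul g u v (rshift 4 (inord 1 : 'I_4))); first by rewrite rsh_inord.
rewrite /cdmul opair_r !ffunE /qmul /qconj /qc /olo /ohi !ffunE !inordK //= ?ffunE ?inordK //= ?lsh_inord // ?rsh_inord // ?scaleRo.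
ring.
Qed.

Lemma cdE6 (g : R) (u v : {ffun 'I_8 -> R^o}) : cdmul g u v (inord 6) = (u (inord 0) * v (inord 6) + u (inord 1) * v (inord 7) + u (inord 2) * v (inord 4) - u (inord 3) * v (inord 5) - u (inord 4) * v (inord 2) + u (inord 5) * v (inord 3) + u (inord 6) * v (inord 0) - u (inord 7) * v (inord 1)).
Proof.
transitivity (cdmul g u v (rshift 4 (inord 2 : 'I_4))); first by rewrite rsh_inord.
rewrite /cdmul opair_r !ffunE /qmul /qconj /qc /olo /ohi !ffunE !inordK //= ?ffunE ?inordK //= ?lsh_inord // ?rsh_inord // ?scaleRo.
ring.
Qed.

Lemma cdE7 (g : R) (u v : {ffun 'I_8 -> R^o}) : cdmul g u v (inord 7) = (u (inord 0) * v (inord 7) - u (inord 1) * v (inord 6) + u (inord 2) * v (inord 5) + u (inord 3) * v (inord 4) - u (inord 4) * v (inord 3) - u (inord 5) * v (inord 2) + u (inord 6) * v (inord 1) + u (inord 7) * v (inord 0)).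
Proof.
transitivity (cdmul g u v (rshift 4 (inord 3 : 'I_4))); first by rewrite rsh_inord.
rewrite /cdmul opair_r !ffunE /qmul /qconj /qc /olo /ohi !ffunE !inordK //= ?ffunE ?inordK //= ?lsh_inord // ?rsh_inord // ?scaleRo.
ring.
Qed.


Lemma iso0 (e0 : lam i0 = -1) (e1 : lam i1 = -1) (e2 : lam i2 = -1) : alg_iso (bullet lam) (@cdmul R 1).
Proof.
exists (fmap [:: (1, (sb false false false)); (1, (sb true true false)); (1, (sb true false true)); (1, (sb false true true)); (1, (sb true false false)); (-1, (sb false true false)); (-1, (sb false false true)); (1, (sb true true true))]); split.
- exists (gmap [:: (1, (sb false false false)); (1, (sb true true false)); (1, (sb true false true)); (1, (sb false true true)); (1, (sb true false false)); (-1, (sb false true false)); (-1, (sb false false true)); (1, (sb true true true))]).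
  + move=> x; apply: mv_ext => a0 a1 a2; rewrite gmapE !big_cons big_nil /= !fmapE !inordK //=.
    case: a0; case: a1; case: a2; rewrite !sb_eq /=; ring.
  + move=> u; apply: oct_ext; rewrite fmapE inordK //= gmapE !big_cons big_nil /= !sb_eq /=; ring.
- move=> a x y; apply: oct_ext; rewrite !ffunE !inordK //= ?scaleRo; ring.
- move=> x y; apply: oct_ext; rewrite ?cdE0 ?cdE1 ?cdE2 ?cdE3 ?cdE4 ?cdE5 ?cdE6 ?cdE7 !fmapE !inordK //=;
    rewrite ?bul000 ?bul100 ?bul010 ?bul001 ?bul110 ?bul101 ?bul011 ?bul111 ?e0 ?e1 ?e2; ring.
Qed.

Lemma iso1 (e0 : lam i0 = -1) (e1 : lam i1 = -1) (e2 : lam i2 = 1) : alg_iso (bullet lam) (@cdmul R 1).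
Proof.
exists (fmap [:: (1, (sb false false false)); (1, (sb false false true)); (1, (sb true true false)); (-1, (sb true true true)); (1, (sb true false false)); (-1, (sb true false true)); (-1, (sb false true false)); (-1, (sb false true true))]); split.
- exists (gmap [:: (1, (sb false false false)); (1, (sb false false true)); (1, (sb true true false)); (-1, (sb true true true)); (1, (sb true false false)); (-1, (sb true false true)); (-1, (sb false true false)); (-1, (sb false true true))]).
  + move=> x; apply: mv_ext => a0 a1 a2; rewrite gmapE !big_cons big_nil /= !fmapE !inordK //=.
    case: a0; case: a1; case: a2; rewrite !sb_eq /=; ring.
  + move=> u; apply: oct_ext; rewrite fmapE inordK //= gmapE !big_cons big_nil /= !sb_eq /=; ring.
- move=> a x y; apply: oct_ext; rewrite !ffunE !inordK //= ?scaleRo; ring.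
- move=> x y; apply: oct_ext; rewrite ?cdE0 ?cdE1 ?cdE2 ?cdE3 ?cdE4 ?cdE5 ?cdE6 ?cdE7 !fmapE !inordK //=;
    rewrite ?bul000 ?bul100 ?bul010 ?bul001 ?bul110 ?bul101 ?bul011 ?bul111 ?e0 ?e1 ?e2; ring.
Qed.

Lemma iso2 (e0 : lam i0 = -1) (e1 : lam i1 = 1) (e2 : lam i2 = -1) : alg_iso (bullet lam) (@cdmul R 1).
Proof.
exists (fmap [:: (1, (sb false false false)); (1, (sb false true false)); (1, (sb true false true)); (1, (sb true true true)); (1, (sb true false false)); (-1, (sb true true false)); (-1, (sb false false true)); (1, (sb false true true))]); split.
- exists (gmap [:: (1, (sb false false false)); (1, (sb false true false)); (1, (sb true false true)); (1, (sb true true true)); (1, (sb true false false)); (-1, (sb true true false)); (-1, (sb false false true)); (1, (sb false true true))]).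
  + move=> x; apply: mv_ext => a0 a1 a2; rewrite gmapE !big_cons big_nil /= !fmapE !inordK //=.
    case: a0; case: a1; case: a2; rewrite !sb_eq /=; ring.
  + move=> u; apply: oct_ext; rewrite fmapE inordK //= gmapE !big_cons big_nil /= !sb_eq /=; ring.
- move=> a x y; apply: oct_ext; rewrite !ffunE !inordK //= ?scaleRo; ring.
- move=> x y; apply: oct_ext; rewrite ?cdE0 ?cdE1 ?cdE2 ?cdE3 ?cdE4 ?cdE5 ?cdE6 ?cdE7 !fmapE !inordK //=;
    rewrite ?bul000 ?bul100 ?bul010 ?bul001 ?bul110 ?bul101 ?bul011 ?bul111 ?e0 ?e1 ?e2; ring.
Qed.

Lemma iso3 (e0 : lam i0 = -1) (e1 : lam i1 = 1) (e2 : lam i2 = 1) : alg_iso (bullet lam) (@cdmul R 1).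
Proof.
exists (fmap [:: (1, (sb false false false)); (1, (sb false true false)); (1, (sb false false true)); (1, (sb false true true)); (1, (sb true false false)); (-1, (sb true true false)); (-1, (sb true false true)); (1, (sb true true true))]); split.
- exists (gmap [:: (1, (sb false false false)); (1, (sb false true false)); (1, (sb false false true)); (1, (sb false true true)); (1, (sb true false false)); (-1, (sb true true false)); (-1, (sb true false true)); (1, (sb true true true))]).
  + move=> x; apply: mv_ext => a0 a1 a2; rewrite gmapE !big_cons big_nil /= !fmapE !inordK //=.
    case: a0; case: a1; case: a2; rewrite !sb_eq /=; ring.
  + move=> u; apply: oct_ext; rewrite fmapE inordK //= gmapE !big_cons big_nil /= !sb_eq /=; ring.
- move=> a x y; apply: oct_ext; rewrite !ffunE !inordK //= ?scaleRo; ring.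
- move=> x y; apply: oct_ext; rewrite ?cdE0 ?cdE1 ?cdE2 ?cdE3 ?cdE4 ?cdE5 ?cdE6 ?cdE7 !fmapE !inordK //=;
    rewrite ?bul000 ?bul100 ?bul010 ?bul001 ?bul110 ?bul101 ?bul011 ?bul111 ?e0 ?e1 ?e2; ring.
Qed.

Lemma iso4 (e0 : lam i0 = 1) (e1 : lam i1 = -1) (e2 : lam i2 = -1) : alg_iso (bullet lam) (@cdmul R 1).
Proof.
exists (fmap [:: (1, (sb false false false)); (1, (sb true false false)); (1, (sb false true true)); (-1, (sb true true true)); (1, (sb false true false)); (1, (sb true true false)); (-1, (sb false false true)); (1, (sb true false true))]); split.
- exists (gmap [:: (1, (sb false false false)); (1, (sb true false false)); (1, (sb false true true)); (-1, (sb true true true)); (1, (sb false true false)); (1, (sb true true false)); (-1, (sb false false true)); (1, (sb true false true))]).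
  + move=> x; apply: mv_ext => a0 a1 a2; rewrite gmapE !big_cons big_nil /= !fmapE !inordK //=.
    case: a0; case: a1; case: a2; rewrite !sb_eq /=; ring.
  + move=> u; apply: oct_ext; rewrite fmapE inordK //= gmapE !big_cons big_nil /= !sb_eq /=; ring.
- move=> a x y; apply: oct_ext; rewrite !ffunE !inordK //= ?scaleRo; ring.
- move=> x y; apply: oct_ext; rewrite ?cdE0 ?cdE1 ?cdE2 ?cdE3 ?cdE4 ?cdE5 ?cdE6 ?cdE7 !fmapE !inordK //=;
    rewrite ?bul000 ?bul100 ?bul010 ?bul001 ?bul110 ?bul101 ?bul011 ?bul111 ?e0 ?e1 ?e2; ring.
Qed.

Lemma iso5 (e0 : lam i0 = 1) (e1 : lam i1 = -1) (e2 : lam i2 = 1) : alg_iso (bullet lam) (@cdmul R 1).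
Proof.
exists (fmap [:: (1, (sb false false false)); (1, (sb true false false)); (1, (sb false false true)); (1, (sb true false true)); (1, (sb false true false)); (1, (sb true true false)); (-1, (sb false true true)); (-1, (sb true true true))]); split.
- exists (gmap [:: (1, (sb false false false)); (1, (sb true false false)); (1, (sb false false true)); (1, (sb true false true)); (1, (sb false true false)); (1, (sb true true false)); (-1, (sb false true true)); (-1, (sb true true true))]).
  + move=> x; apply: mv_ext => a0 a1 a2; rewrite gmapE !big_cons big_nil /= !fmapE !inordK //=.
    case: a0; case: a1; case: a2; rewrite !sb_eq /=; ring.
  + move=> u; apply: oct_ext; rewrite fmapE inordK //= gmapE !big_cons big_nil /= !sb_eq /=; ring.
- move=> a x y; apply: oct_ext; rewrite !ffunE !inordK //= ?scaleRo; ring.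
- move=> x y; apply: oct_ext; rewrite ?cdE0 ?cdE1 ?cdE2 ?cdE3 ?cdE4 ?cdE5 ?cdE6 ?cdE7 !fmapE !inordK //=;
    rewrite ?bul000 ?bul100 ?bul010 ?bul001 ?bul110 ?bul101 ?bul011 ?bul111 ?e0 ?e1 ?e2; ring.
Qed.

Lemma iso6 (e0 : lam i0 = 1) (e1 : lam i1 = 1) (e2 : lam i2 = -1) : alg_iso (bullet lam) (@cdmul R 1).
Proof.
exists (fmap [:: (1, (sb false false false)); (1, (sb true false false)); (1, (sb false true false)); (1, (sb true true false)); (1, (sb false false true)); (1, (sb true false true)); (1, (sb false true true)); (1, (sb true true true))]); split.
- exists (gmap [:: (1, (sb false false false)); (1, (sb true false false)); (1, (sb false true false)); (1, (sb true true false)); (1, (sb false false true)); (1, (sb true false true)); (1, (sb false true true)); (1, (sb true true true))]).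
  + move=> x; apply: mv_ext => a0 a1 a2; rewrite gmapE !big_cons big_nil /= !fmapE !inordK //=.
    case: a0; case: a1; case: a2; rewrite !sb_eq /=; ring.
  + move=> u; apply: oct_ext; rewrite fmapE inordK //= gmapE !big_cons big_nil /= !sb_eq /=; ring.
- move=> a x y; apply: oct_ext; rewrite !ffunE !inordK //= ?scaleRo; ring.
- move=> x y; apply: oct_ext; rewrite ?cdE0 ?cdE1 ?cdE2 ?cdE3 ?cdE4 ?cdE5 ?cdE6 ?cdE7 !fmapE !inordK //=;
    rewrite ?bul000 ?bul100 ?bul010 ?bul001 ?bul110 ?bul101 ?bul011 ?bul111 ?e0 ?e1 ?e2; ring.
Qed.

Lemma iso7 (e0 : lam i0 = 1) (e1 : lam i1 = 1) (e2 : lam i2 = 1) : alg_iso (bullet lam) (@cdmul R (-1)).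
Proof.
exists (fmap [:: (1, (sb false false false)); (1, (sb true false false)); (1, (sb false true false)); (1, (sb true true false)); (1, (sb false false true)); (1, (sb true false true)); (1, (sb false true true)); (1, (sb true true true))]); split.
- exists (gmap [:: (1, (sb false false false)); (1, (sb true false false)); (1, (sb false true false)); (1, (sb true true false)); (1, (sb false false true)); (1, (sb true false true)); (1, (sb false true true)); (1, (sb true true true))]).
  + move=> x; apply: mv_ext => a0 a1 a2; rewrite gmapE !big_cons big_nil /= !fmapE !inordK //=.
    case: a0; case: a1; case: a2; rewrite !sb_eq /=; ring.
  + move=> u; apply: oct_ext; rewrite fmapE inordK //= gmapE !big_cons big_nil /= !sb_eq /=; ring.
- move=> a x y; apply: oct_ext; rewrite !ffunE !inordK //= ?scaleRo; ring.
- move=> x y; apply: oct_ext; rewrite ?cdE0 ?cdE1 ?cdE2 ?cdE3 ?cdE4 ?cdE5 ?cdE6 ?cdE7 !fmapE !inordK //=;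
    rewrite ?bul000 ?bul100 ?bul010 ?bul001 ?bul110 ?bul101 ?bul011 ?bul111 ?e0 ?e1 ?e2; ring.
Qed.


Hypothesis hlam : forall i : 'I_3, lam i = 1 \/ lam i = -1.


Lemma part_a (x : mv R) : bullet lam x (gstar x) = Nf lam x *: gone R.
Proof.
apply: mv_ext => a0 a1 a2; rewrite mvZ gone_sb NfE.
case: a0; case: a1; case: a2; rewrite ?bul000 ?bul100 ?bul010 ?bul001 ?bul110 ?bul101 ?bul011 ?bul111 !gstar_sb /=; case: (hlam i0) => e0; case: (hlam i1) => e1; case: (hlam i2) => e2; rewrite ?e0 ?e1 ?e2; ring.
Qed.

Lemma nondeg : nondegenerate_qf (Nf lam).
Proof.
move=> x H; apply: mv_ext => a0 a1 a2; move: (H (eb (sb a0 a1 a2))).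
rewrite /polar !NfE !mvD !ffunE !sb_eq.
case: a0; case: a1; case: a2 => /=; case: (hlam i0) => e0; case: (hlam i1) => e1; case: (hlam i2) => e2; rewrite ?e0 ?e1 ?e2 => h; lra.
Qed.

Lemma part_d (x y : mv R) : Nf lam (bullet lam x y) = Nf lam x * Nf lam y.
Proof. rewrite !NfE ?bul000 ?bul100 ?bul010 ?bul001 ?bul110 ?bul101 ?bul011 ?bul111; case: (hlam i0) => e0; case: (hlam i1) => e1; case: (hlam i2) => e2; rewrite ?e0 ?e1 ?e2; ring. Qed.

Lemma hurw : is_hurwitz (bullet lam) (gone R) (Nf lam).
Proof. split; [exact: bilin | exact: part_b | exact: quadf | exact: nondeg | exact: part_d]. Qed.

End Cl2.

Theorem theorem1 (R : realType) (lam : 'I_3 -> R)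
  (hlam : forall i : 'I_3, lam i = 1 \/ lam i = -1) :
  [/\ (forall x : mv R, bullet lam x (gstar x) = Nf lam x *: gone R),
      (forall x : mv R, bullet lam (gone R) x = x /\ bullet lam x (gone R) = x),
      is_quad_form (Nf lam) /\ nondegenerate_qf (Nf lam),
      (forall x y : mv R, Nf lam (bullet lam x y) = Nf lam x * Nf lam y) &
      is_hurwitz (bullet lam) (gone R) (Nf lam) /\
      (alg_iso (bullet lam) (@omul R) \/ alg_iso (bullet lam) (@somul R))].
Proof.
split.
- by move=> x; apply: part_a.
- by move=> x; apply: part_b.
- by split; [apply: quadf | apply: nondeg].
- by move=> x y; apply: part_d.
- split; first by apply: hurw.
  case: (hlam i0) => e0; case: (hlam i1) => e1; case: (hlam i2) => e2.
  + by left; exact: (iso7 e0 e1 e2).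
  + by right; exact: (iso6 e0 e1 e2).
  + by right; exact: (iso5 e0 e1 e2).
  + by right; exact: (iso4 e0 e1 e2).
  + by right; exact: (iso3 e0 e1 e2).
  + by right; exact: (iso2 e0 e1 e2).
  + by right; exact: (iso1 e0 e1 e2).
  + by right; exact: (iso0 e0 e1 e2).
Qed.
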